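(* For $R>0$, let $s(R)=\tanh\frac R2$. Then the geodesic ball of radius $R$ about $\mathbf 0$ with respect to $g_{\tilde B}$ equals the Euclidean ball of radius $s(R)$ about $\mathbf 0$: $B^{g_{\tilde B}}_R(\mathbf 0)=B^{\mathbb R}_{s(R)}(\mathbf 0)$.
   Context: On the open unit ball $\mathbb B^{2n+2}\subset\mathbb R^{2n+2}\cong\mathbb C^{n+1}$ (coordinates $z_j=x_j+iy_j$, $r=|z|$), let $\theta=r^{-2}\sum_j(x_jdy_j-y_jdx_j)$ and let $g_{\tilde B}=\frac{4}{(1-r^2)^2}g_{\mathbb R}+\frac{16r^4}{(1-r^2)^4}\theta^2$ be the modified Bergman metric, where $g_{\mathbb R}$ is the Euclidean metric. *)

(* Defs.v *)
From Stdlib Require Import Reals Lra.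
From Coquelicot Require Import Coquelicot.
Open Scope R_scope.

(* A point of R^{2n+2} = C^{n+1} is encoded as p : nat -> R with
   x_j = p (2j), y_j = p (2j+1), j = 0..n; coordinates >= 2n+2 are ignored. *)

Definition sqnorm (n : nat) (p : nat -> R) : R :=
  sum_f_R0 (fun k => p k ^ 2) (2 * n + 1).

(* omega_p(v) = sum_j (x_j dy_j - y_j dx_j)(v) = r^2 theta_p(v) *)
Definition omega (n : nat) (p v : nat -> R) : R :=
  sum_f_R0 (fun j => p (2 * j)%nat * v (2 * j + 1)%nat
                     - p (2 * j + 1)%nat * v (2 * j)%nat) n.

(* modified Bergman metric g_B~ at p applied to (v,v):
   4/(1-r^2)^2 |v|^2 + 16 r^4/(1-r^2)^4 theta(v)^2, with r^4 theta(v)^2 = omega(v)^2 *)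
Definition gB (n : nat) (p v : nat -> R) : R :=
  4 / (1 - sqnorm n p) ^ 2 * sqnorm n v
  + 16 / (1 - sqnorm n p) ^ 4 * (omega n p v) ^ 2.

Definition admissible_curve (n : nat) (c : nat -> R -> R) (p : nat -> R) : Prop :=
  (forall k, (k < 2 * n + 2)%nat ->
     (forall t, 0 <= t <= 1 -> ex_derive (c k) t /\ continuous (Derive (c k)) t)
     /\ c k 0 = 0 /\ c k 1 = p k)
  /\ (forall t, 0 <= t <= 1 -> sqnorm n (fun k => c k t) < 1).

Definition gB_length (n : nat) (c : nat -> R -> R) : R :=
  RInt (fun t => sqrt (gB n (fun k => c k t) (fun k => Derive (c k) t))) 0 1.

(* p lies in the geodesic ball B^{g_B~}_Rad(0): p in B^{2n+2} and the
   Riemannian distance d(0,p) = inf of lengths of admissible curves is < Rad,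
   i.e. some admissible curve from 0 to p has length < Rad. *)
Definition geodesic_ball (n : nat) (Rad : R) (p : nat -> R) : Prop :=
  sqnorm n p < 1 /\
  exists c, admissible_curve n c p /\ gB_length n c < Rad.

Definition euclid_ball (n : nat) (s : R) (p : nat -> R) : Prop :=
  sqrt (sqnorm n p) < s.

(* Main.v *)
Require Import Defs.
From Stdlib Require Import Reals Lra Lia Psatz FunctionalExtensionality.
From Coquelicot Require Import Coquelicot.
Open Scope R_scope.

Lemma cplus (f g : R -> R) x : continuous f x -> continuous g x -> continuous (fun y => f y + g y) x.
Proof. intros; exact (continuous_plus f g x H H0). Qed.
Lemma cminus (f g : R -> R) x : continuous f x -> continuous g x -> continuous (fun y => f y - g y) x.
Proof. intros; exact (continuous_minus f g x H H0). Qed.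
Lemma cmult (f g : R -> R) x : continuous f x -> continuous g x -> continuous (fun y => f y * g y) x.
Proof. intros; exact (continuous_mult f g x H H0). Qed.
Lemma cinv (f : R -> R) x : continuous f x -> f x <> 0 -> continuous (fun y => / f y) x.
Proof. intros; exact (continuous_Rinv_comp f x H H0). Qed.
Lemma cpow (f : R -> R) x m : continuous f x -> continuous (fun y => f y ^ m) x.
Proof. intros; induction m; simpl. apply continuous_const. now apply cmult. Qed.
Lemma cconst (c x : R) : continuous (fun _ : R => c) x.
Proof. apply continuous_const. Qed.

Lemma sum_cont (g : nat -> R -> R) N t :
  (forall k, (k <= N)%nat -> continuous (g k) t) ->
  continuous (fun t => sum_f_R0 (fun k => g k t) N) t.
Proof.
  induction N; simpl; intros H. apply H; lia.
  apply cplus. apply IHN; intros; apply H; lia. apply H; lia.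
Qed.

Lemma sum_deriv (g : nat -> R -> R) (dg : nat -> R) N t :
  (forall k, (k <= N)%nat -> is_derive (g k) t (dg k)) ->
  is_derive (fun t => sum_f_R0 (fun k => g k t) N) t (sum_f_R0 dg N).
Proof.
  induction N; simpl; intros H. apply H; lia.
  apply (is_derive_plus (fun t => sum_f_R0 (fun k => g k t) N) (g (S N))).
  apply IHN; intros; apply H; lia. apply H; lia.
Qed.

Lemma sum_sq_nonneg (a : nat -> R) N : 0 <= sum_f_R0 (fun k => a k ^ 2) N.
Proof. induction N; simpl. apply pow2_ge_0. apply Rplus_le_le_0_compat; [assumption|apply pow2_ge_0]. Qed.

Lemma CS (a b : nat -> R) N :
  (sum_f_R0 (fun k => a k * b k) N) ^ 2 <=
  sum_f_R0 (fun k => a k ^ 2) N * sum_f_R0 (fun k => b k ^ 2) N.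
Proof.
  induction N. simpl. nra.
  cbn [sum_f_R0].
  set (A := sum_f_R0 (fun k => a k ^ 2) N) in *.
  set (B := sum_f_R0 (fun k => b k ^ 2) N) in *.
  set (C := sum_f_R0 (fun k => a k * b k) N) in *.
  assert (HA : 0 <= A) by apply sum_sq_nonneg.
  assert (HB : 0 <= B) by apply sum_sq_nonneg.
  set (x := a (S N)); set (y := b (S N)).
  assert (K : 2 * x * y * C <= A * y^2 + x^2 * B).
  { destruct (Req_dec A 0) as [h|h].
    - assert (C = 0) by (rewrite h in IHN; simpl in IHN; apply Rle_antisym; nra). subst C. rewrite H, h. nra.
    - assert (A * (A * y^2 + x^2 * B - 2*x*y*C) = (A*y - x*C)^2 + x^2*(A*B - C^2)) by ring.
      assert (0 <= (A*y - x*C)^2 + x^2*(A*B - C^2)) by (apply Rplus_le_le_0_compat; [apply pow2_ge_0| apply Rmult_le_pos; [apply pow2_ge_0| lra]]).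
      assert (HA0 : 0 < A) by (destruct HA as [?|e]; [assumption| now elim h]). apply (Rmult_le_reg_l A); [assumption|]. lra. }
  nra.
Qed.
Definition hh (s : R) := ln (1 + s) - ln (1 - s).

Lemma hh_eq s : -1 < s < 1 -> hh s = ln ((1 + s) / (1 - s)).
Proof. intros; unfold hh; rewrite ln_div; lra. Qed.

Lemma hh_lt_ln s q : 0 <= s < 1 -> 0 < q -> (1 + s) / (1 - s) < q -> hh s < ln q.
Proof.
  intros Hs Hq H. rewrite hh_eq by lra. apply ln_increasing; auto.
  apply Rdiv_lt_0_compat; lra.
Qed.

Lemma hh_mono s t : 0 <= s <= t -> t < 1 -> hh s <= hh t.
Proof.
  intros Hs Ht. rewrite !hh_eq by lra. apply ln_le. apply Rdiv_lt_0_compat; lra.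
  assert ((1 + t) / (1 - t) - (1 + s) / (1 - s) = 2 * (t - s) * / ((1 - t) * (1 - s))) by (field; lra).
  assert (0 <= 2 * (t - s) * / ((1 - t) * (1 - s))).
  { apply Rmult_le_pos. lra. apply Rlt_le, Rinv_0_lt_compat, Rmult_lt_0_compat; lra. }
  lra.
Qed.

Lemma tanh_eq x : tanh (x / 2) = (exp x - 1) / (exp x + 1).
Proof.
  unfold tanh, sinh, cosh.
  assert (E : exp x = exp (x/2) * exp (x/2)) by (rewrite <- exp_plus; f_equal; field).
  rewrite E, exp_Ropp. pose proof (exp_pos (x/2)). field. split; nra.
Qed.

Lemma tanh_lt1 x : tanh (x / 2) < 1.
Proof.
  rewrite tanh_eq. pose proof (exp_pos x). apply Rlt_div_l; lra.
Qed.

Lemma key a Rad : 0 <= a < 1 -> (hh a < Rad <-> a < tanh (Rad / 2)).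
Proof.
  intros Ha. rewrite tanh_eq, hh_eq by lra. pose proof (exp_pos Rad) as HE.
  assert (HX : 0 < (1 + a) / (1 - a)) by (apply Rdiv_lt_0_compat; lra).
  split; intro H.
  - apply exp_increasing in H. rewrite exp_ln in H by auto.
    apply Rlt_div_l in H; [|lra]. apply Rlt_div_r; lra.
  - rewrite <- (ln_exp Rad). apply ln_increasing; auto.
    apply Rlt_div_r in H; [|lra]. apply Rlt_div_l; lra.
Qed.
Lemma phi_deriv (f : R -> R) t l : is_derive f t l -> 0 < f t < 1 ->
  is_derive (fun t => hh (sqrt (f t))) t (l / (sqrt (f t) * (1 - f t))).
Proof.
  intros H Hf.
  assert (Hs : 0 < sqrt (f t)) by (apply sqrt_lt_R0; lra).
  assert (Hs1 : sqrt (f t) < 1) by (rewrite <- sqrt_1; apply sqrt_lt_1_alt; lra).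
  assert (Hsq : sqrt (f t) * sqrt (f t) = f t) by (apply sqrt_sqrt; lra).
  assert (HG : is_derive (fun x => hh (sqrt x)) (f t) (/ (sqrt (f t) * (1 - f t)))).
  { unfold hh. auto_derive.
    - repeat split; lra.
    - set (s := sqrt (f t)) in *. rewrite <- Hsq. field. repeat split; nra. }
  pose proof (is_derive_comp (fun x => hh (sqrt x)) f t _ _ HG H) as HC.
  replace (l / (sqrt (f t) * (1 - f t))) with (scal l (/ (sqrt (f t) * (1 - f t)))).
  exact HC. unfold scal; simpl; unfold mult; simpl. unfold Rdiv; ring.
Qed.

Lemma cont_sqnorm n (v : nat -> R -> R) t :
  (forall k, (k <= 2 * n + 1)%nat -> continuous (v k) t) ->
  continuous (fun t => sqnorm n (fun k => v k t)) t.
Proof.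
  intros H. unfold sqnorm. apply (sum_cont (fun k t => v k t ^ 2)).
  intros k Hk. apply cpow. auto.
Qed.

Lemma cont_omega n (v w : nat -> R -> R) t :
  (forall k, (k <= 2 * n + 1)%nat -> continuous (v k) t /\ continuous (w k) t) ->
  continuous (fun t => omega n (fun k => v k t) (fun k => w k t)) t.
Proof.
  intros H. unfold omega.
  apply (sum_cont (fun j t => v (2 * j)%nat t * w (2 * j + 1)%nat t - v (2 * j + 1)%nat t * w (2 * j)%nat t)).
  intros j Hj. apply cminus; apply cmult; apply H; lia.
Qed.
Lemma lower n c p eps : admissible_curve n c p -> 0 < eps ->
  hh (sqrt ((sqnorm n p + eps) / (1 + eps))) - hh (sqrt (eps / (1 + eps))) <= gB_length n c.
Proof.
  intros [Hc Hin] He.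
  pose (U t := sqnorm n (fun k => c k t)).
  pose (D t := sum_f_R0 (fun k => c k t * Derive (c k) t) (2 * n + 1)).
  pose (V t := sqnorm n (fun k => Derive (c k) t)).
  pose (Q t := (U t + eps) / (1 + eps)).
  pose (dP t := 2 * D t / (1 + eps) / (sqrt (Q t) * (1 - Q t))).
  pose (F t := sqrt (gB n (fun k => c k t) (fun k => Derive (c k) t))).
  assert (Hck : forall k t, (k <= 2 * n + 1)%nat -> 0 <= t <= 1 ->
            is_derive (c k) t (Derive (c k) t) /\ continuous (c k) t /\ continuous (Derive (c k)) t).
  { intros k t Hk Ht. destruct (Hc k ltac:(lia)) as [H1 _]. destruct (H1 t Ht) as [Hd Hcd].
    split; [now apply Derive_correct|]. split; [exact (@ex_derive_continuous R_AbsRing R_NormedModule (c k) t Hd)|exact Hcd]. }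
  assert (HU0 : forall t, 0 <= U t) by (intros; apply sum_sq_nonneg).
  assert (HU1 : forall t, 0 <= t <= 1 -> U t < 1) by (intros; apply Hin; auto).
  assert (HQ : forall t, 0 <= t <= 1 -> 0 < Q t < 1).
  { intros t Ht. specialize (HU0 t); specialize (HU1 t Ht). unfold Q. split.
    apply Rdiv_lt_0_compat; lra. apply Rlt_div_l; lra. }
  assert (HdU : forall t, 0 <= t <= 1 -> is_derive U t (2 * D t)).
  { intros t Ht. unfold U, D, sqnorm. rewrite scal_sum.
    apply (sum_deriv (fun k t => c k t ^ 2)). intros k Hk.
    destruct (Hck k t Hk Ht) as [Hd _].
    pose proof (is_derive_pow (c k) 2 t _ Hd) as HP.
    replace (c k t * Derive (c k) t * 2) with (INR 2 * Derive (c k) t * c k t ^ Init.Nat.pred 2)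
      by (simpl; ring). exact HP. }
  assert (HdQ : forall t, 0 <= t <= 1 -> is_derive Q t (2 * D t / (1 + eps))).
  { intros t Ht.
    assert (HL : is_derive (fun x => (x + eps) / (1 + eps)) (U t) (/ (1 + eps))).
    { auto_derive. lra. field. lra. }
    pose proof (is_derive_comp _ U t _ _ HL (HdU t Ht)) as HC.
    replace (2 * D t / (1 + eps)) with (scal (2 * D t) (/ (1 + eps))). exact HC.
    unfold scal; simpl; unfold mult; simpl. unfold Rdiv; ring. }
  assert (HdP : forall t, 0 <= t <= 1 -> is_derive (fun t => hh (sqrt (Q t))) t (dP t)).
  { intros t Ht. apply phi_deriv; auto. }
  assert (HcU : forall t, 0 <= t <= 1 -> continuous U t).
  { intros t Ht. apply cont_sqnorm. intros k Hk. apply (Hck k t Hk Ht). }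
  assert (HcD : forall t, 0 <= t <= 1 -> continuous D t).
  { intros t Ht. unfold D. apply (sum_cont (fun k t => c k t * Derive (c k) t)).
    intros k Hk. apply cmult; apply (Hck k t Hk Ht). }
  assert (HcdP : forall t, 0 <= t <= 1 -> continuous dP t).
  { intros t Ht. specialize (HQ t Ht). unfold dP, Rdiv.
    assert (HcQ : continuous Q t).
    { unfold Q, Rdiv. apply cmult; [apply cplus; [apply HcU; auto| apply cconst]| apply cconst]. }
    apply cmult. apply cmult. apply cmult. apply cconst. apply HcD; auto. apply cconst.
    apply cinv. apply cmult. apply continuous_sqrt_comp. exact HcQ. apply cminus. apply cconst. exact HcQ.
    apply Rgt_not_eq, Rmult_lt_0_compat. apply sqrt_lt_R0; lra. lra. }
  assert (HI : is_RInt dP 0 1 (hh (sqrt (Q 1)) - hh (sqrt (Q 0)))).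
  { apply (is_RInt_derive (fun t => hh (sqrt (Q t)))).
    - intros x Hx. rewrite Rmin_left, Rmax_right in Hx by lra. auto.
    - intros x Hx. rewrite Rmin_left, Rmax_right in Hx by lra. auto. }
  assert (HcF : forall t, 0 <= t <= 1 -> continuous F t).
  { intros t Ht. unfold F. apply continuous_sqrt_comp. unfold gB, Rdiv.
    specialize (HU1 t Ht).
    assert (HcW : continuous (fun t => omega n (fun k => c k t) (fun k => Derive (c k) t)) t).
    { apply cont_omega. intros k Hk. split; apply (Hck k t Hk Ht). }
    assert (HcV : continuous V t).
    { apply cont_sqnorm. intros k Hk. apply (Hck k t Hk Ht). }
    assert (Hc1 : continuous (fun t => 1 - U t) t) by (apply cminus; [apply cconst| apply HcU; auto]).
    assert (HU2 : 1 - sqnorm n (fun k => c k t) <> 0) by (unfold U in HU1; apply Rgt_not_eq; lra).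
    apply cplus; apply cmult.
    - apply cmult. apply cconst. apply cinv. apply cpow. exact Hc1. apply pow_nonzero. exact HU2.
    - exact HcV.
    - apply cmult. apply cconst. apply cinv. apply cpow. exact Hc1. apply pow_nonzero. exact HU2.
    - apply cpow. exact HcW. }
  assert (HexF : ex_RInt F 0 1).
  { apply (@ex_RInt_continuous R_CompleteNormedModule). intros z Hz. rewrite Rmin_left, Rmax_right in Hz by lra. auto. }
  assert (Hle : forall t, 0 < t < 1 -> dP t <= F t).
  { intros t Ht. assert (Ht' : 0 <= t <= 1) by lra.
    specialize (HQ t Ht'). specialize (HU0 t). specialize (HU1 t Ht').
    assert (HV0 : 0 <= V t) by apply sum_sq_nonneg.
    assert (HCS : D t ^ 2 <= U t * V t).
    { unfold D, U, V, sqnorm. apply (CS (fun k => c k t) (fun k => Derive (c k) t)). }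
    set (s := sqrt (Q t)).
    assert (Hs0 : 0 < s) by (apply sqrt_lt_R0; lra).
    assert (Hs2 : s * s = Q t) by (apply sqrt_sqrt; lra).
    assert (HUQ : U t <= Q t).
    { unfold Q. apply Rle_div_r; nra. }
    set (sv := sqrt (V t)).
    assert (Hsv0 : 0 <= sv) by apply sqrt_pos.
    assert (Hsv2 : sv * sv = V t) by (apply sqrt_sqrt; lra).
    assert (HD2 : D t * D t <= (s*sv)*(s*sv)).
    { replace ((s*sv)*(s*sv)) with (Q t * V t) by (rewrite <- Hs2, <- Hsv2; ring).
      apply Rle_trans with (U t * V t). simpl in HCS; lra. apply Rmult_le_compat_r; lra. }
    assert (Hssv : 0 <= s * sv) by (apply Rmult_le_pos; lra).
    assert (HDs : D t <= s * sv).
    { destruct (Rle_or_lt (D t) (s*sv)) as [h|h]; auto.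
      exfalso. assert ((s*sv)*(s*sv) < D t * D t) by (apply Rmult_le_0_lt_compat; lra). lra. }
    assert (E1 : dP t = 2 * D t / (s * (1 - U t))).
    { unfold dP. fold s. unfold Q. field. repeat split; lra. }
    assert (E2 : 2 * D t / (s * (1 - U t)) <= 2 * sv / (1 - U t)).
    { apply Rle_div_l. apply Rmult_lt_0_compat; lra.
      replace (2 * sv / (1 - U t) * (s * (1 - U t))) with (2 * (s * sv)) by (field; lra). lra. }
    assert (E3 : 2 * sv / (1 - U t) <= F t).
    { unfold F, gB. fold (U t). fold (V t).
      rewrite <- (sqrt_pow2 (2 * sv / (1 - U t))).
      2:{ apply Rle_div_r; lra. }
      apply sqrt_le_1_alt.
      assert (0 <= 16 / (1 - U t) ^ 4 * omega n (fun k => c k t) (fun k => Derive (c k) t) ^ 2).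
      { apply Rmult_le_pos. apply Rlt_le, Rdiv_lt_0_compat. lra. apply pow_lt; lra. apply pow2_ge_0. }
      assert ((2 * sv / (1 - U t)) ^ 2 = 4 / (1 - U t) ^ 2 * V t) by (rewrite <- Hsv2; field; lra).
      lra. }
    lra. }
  assert (HexP : ex_RInt dP 0 1) by (eexists; exact HI).
  pose proof (RInt_le dP F 0 1 ltac:(lra) HexP HexF Hle) as HR.
  rewrite (is_RInt_unique _ _ _ _ HI) in HR.
  unfold gB_length. fold F.
  assert (EU1 : U 1 = sqnorm n p).
  { unfold U, sqnorm. apply sum_eq. intros k Hk. destruct (Hc k ltac:(lia)) as [_ [_ H1]]. now rewrite H1. }
  assert (EU0 : U 0 = 0).
  { unfold U, sqnorm. transitivity (sum_f_R0 (fun _ => 0) (2 * n + 1)).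
    2:{ rewrite sum_cte; ring. }
    apply sum_eq. intros k Hk. destruct (Hc k ltac:(lia)) as [_ [H0 _]]. rewrite H0. ring. }
  unfold Q in HR. rewrite EU1, EU0, Rplus_0_l in HR. exact HR.
Qed.
Lemma sqnorm_scal n t (p : nat -> R) : sqnorm n (fun k => t * p k) = t ^ 2 * sqnorm n p.
Proof. unfold sqnorm. rewrite scal_sum. apply sum_eq. intros; ring. Qed.

Lemma omega_radial n t (p : nat -> R) : omega n (fun k => t * p k) p = 0.
Proof.
  unfold omega. transitivity (sum_f_R0 (fun _ => 0) n).
  apply sum_eq; intros; ring. rewrite sum_cte; ring.
Qed.

Theorem lemma4p1 (n : nat) (Rad : R) (hR : 0 < Rad) (p : nat -> R) :
  geodesic_ball n Rad p <-> euclid_ball n (tanh (Rad / 2)) p.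
Proof.
  pose proof (sum_sq_nonneg p (2 * n + 1)) as HP0. fold (sqnorm n p) in HP0.
  split.
  - intros [HP [c [Hadm HL]]]. unfold euclid_ball.
    set (P := sqnorm n p) in *.
    assert (Ha : 0 <= sqrt P < 1).
    { split. apply sqrt_pos. rewrite <- sqrt_1. apply sqrt_lt_1_alt; lra. }
    apply key; auto.
    destruct (Rlt_or_le (hh (sqrt P)) Rad) as [h|h]; auto. exfalso.
    set (L := gB_length n c) in *.
    set (q := exp (Rad - L)).
    assert (Hq : 1 < q) by (unfold q; rewrite <- exp_0; apply exp_increasing; lra).
    set (s0 := (q - 1) / (2 * (q + 1))).
    assert (Hs0 : s0 * (q + 1) = (q - 1) / 2) by (unfold s0; field; lra).
    assert (Hs0p : 0 < s0) by (unfold s0; apply Rdiv_lt_0_compat; lra).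
    assert (Hs0l : s0 < 1 / 2) by nra.
    set (eps := s0 ^ 2 / (1 - s0 ^ 2)).
    assert (He : 0 < eps) by (unfold eps; apply Rdiv_lt_0_compat; nra).
    pose proof (lower n c p eps Hadm He) as Hlow. fold L in Hlow. fold P in Hlow.
    assert (E0 : sqrt (eps / (1 + eps)) = s0).
    { replace (eps / (1 + eps)) with (s0 ^ 2) by (unfold eps; field; split; nra).
      apply sqrt_pow2; lra. }
    rewrite E0 in Hlow.
    assert (Hm1 : P <= (P + eps) / (1 + eps)) by (apply Rle_div_r; nra).
    assert (Hm2 : (P + eps) / (1 + eps) < 1) by (apply Rlt_div_l; lra).
    assert (Hmono : hh (sqrt P) <= hh (sqrt ((P + eps) / (1 + eps)))).
    { apply hh_mono. split. apply sqrt_pos. apply sqrt_le_1_alt; auto.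
      apply Rlt_le_trans with (sqrt 1); [apply sqrt_lt_1_alt; split; lra| rewrite sqrt_1; lra]. }
    assert (Hs0q : hh s0 < ln q).
    { apply hh_lt_ln; try lra. apply Rlt_div_l; nra. }
    unfold q in Hs0q. rewrite ln_exp in Hs0q. lra.
  - intros H. unfold euclid_ball in H. set (P := sqnorm n p) in *.
    set (a := sqrt P) in *.
    pose proof (tanh_lt1 Rad) as Ht1.
    assert (Ha : 0 <= a < 1) by (split; [apply sqrt_pos| lra]).
    assert (HPa : P = a * a) by (unfold a; symmetry; apply sqrt_sqrt; lra).
    assert (HP1 : P < 1) by nra.
    split; [exact HP1|].
    assert (HDer : forall k t, Derive (fun t => t * p k) t = p k).
    { intros k t. apply is_derive_unique. auto_derive; auto. ring. }
    exists (fun k t => t * p k). split.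
    + split.
      * intros k Hk. split; [|split; ring].
        intros t Ht. split. auto_derive; auto.
        apply (continuous_ext (fun _ => p k)). intros; symmetry; apply HDer. apply continuous_const.
      * intros t Ht. rewrite sqnorm_scal. fold P. assert (t ^ 2 <= 1) by (simpl; nra). assert (t ^ 2 * P <= 1 * P) by (apply Rmult_le_compat_r; lra). lra.
    + apply key in H; auto. unfold gB_length.
      rewrite (RInt_ext _ (fun t => a / (1 + t * a) + a / (1 - t * a))).
      2:{ intros x Hx. rewrite Rmin_left, Rmax_right in Hx by lra.
          assert (EF : (fun k => Derive (fun t => t * p k) x) = p)
            by (apply functional_extensionality; intros; apply HDer).
          rewrite EF. unfold gB. rewrite sqnorm_scal, omega_radial. fold P.
          assert (0 < 1 - x * a) by nra. assert (0 < 1 + x * a) by nra.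
          rewrite <- (sqrt_pow2 (a / (1 + x * a) + a / (1 - x * a))).
          f_equal. rewrite HPa. field. split; nra.
          apply Rplus_le_le_0_compat; apply Rle_div_r; lra. }
      assert (HI : is_RInt (fun t => a / (1 + t * a) + a / (1 - t * a)) 0 1
                     ((ln (1 + 1 * a) - ln (1 - 1 * a)) - (ln (1 + 0 * a) - ln (1 - 0 * a)))).
      { apply (is_RInt_derive (fun t => ln (1 + t * a) - ln (1 - t * a))).
        - intros x Hx. rewrite Rmin_left, Rmax_right in Hx by lra.
          auto_derive. repeat split; nra. field. split; nra.
        - intros x Hx. rewrite Rmin_left, Rmax_right in Hx by lra.
          apply (@ex_derive_continuous R_AbsRing R_NormedModule).
          auto_derive. repeat split; nra. }
      rewrite (is_RInt_unique _ _ _ _ HI).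
      replace (1 * a) with a by ring. replace (0 * a) with 0 by ring.
      rewrite Rplus_0_r, Rminus_0_r, ln_1. unfold hh in H. lra.
Qed.
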